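(* For a positive integer $n$, let \[ Z^{+}(n)=\sum_{k=0}^{n-1}\frac{(-1)^{k}+k!\,(n-k-1)!}{n}. \] Then $Z^{+}(n)$ is a natural number if and only if $n$ is even or $n$ is non-composite (i.e. $n=1$ or $n$ is prime).
   Context: $Z^{+}(n)=\sum_{k=0}^{n-1}(-1)^kM_k(n)$ where $M_{k}(n)=\frac{1+(-1)^{k}k!(n-k-1)!}{n}$ for $0\le k\le n-1$. *)

(* Defs.v *)
From mathcomp Require Import all_boot all_order all_algebra.
Set Implicit Arguments. Unset Strict Implicit. Unset Printing Implicit Defensive.
Import Order.TTheory GRing.Theory Num.Theory.
Local Open Scope ring_scope.

Definition Zplus (n : nat) : rat :=
  \sum_(k < n) (((-1) ^+ k + ((k`! * (n - k - 1)`!)%N)%:R) / n%:R).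

(* Main.v *)
Require Import Defs.
From mathcomp Require Import all_boot all_order all_algebra.
From mathcomp Require Import zify ring.
Import GRing.Theory Num.Theory.
Local Open Scope ring_scope.

Definition ff (n k : nat) : nat := (k`! * (n - k - 1)`!)%N.
Definition SS (n : nat) : nat := (\sum_(k < n) ff n k)%N.

Lemma sum_sign n : \sum_(k < n) ((-1 : rat) ^+ k) = (odd n)%:R.
Proof.
elim: n => [|n IH]; first by rewrite big_ord0.
rewrite big_ord_recr /= IH -signr_odd.
by case: (odd n) => /=; rewrite ?expr0 ?expr1; ring.
Qed.

Lemma Zplus_eq n : Zplus n = (odd n + SS n)%N%:R / n%:R.
Proof.
rewrite /Zplus -mulr_suml big_split /= sum_sign natrD /SS natr_sum.
by [].
Qed.

Lemma int_iff n : (0 < n)%N ->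
  (exists m : nat, Zplus n = m%:R) <-> (n %| odd n + SS n)%N.
Proof.
move=> n0; rewrite Zplus_eq; set T := (odd n + SS n)%N.
have nz : (n%:R : rat) != 0 by rewrite pnatr_eq0 -lt0n.
split.
- move=> [m Hm].
  have : (T%:R : rat) = (m * n)%N%:R by rewrite natrM -Hm divfK.
  move/eqP; rewrite eqr_nat => /eqP ->.
  exact: dvdn_mull.
- move=> /dvdnP [m Hm]; exists m.
  by rewrite Hm natrM mulfK.
Qed.

Lemma ff_sym n j : (j < n)%N -> ff n (n - 1 - j) = ff n j.
Proof.
move=> jn; rewrite /ff.
have -> : (n - (n - 1 - j) - 1 = j)%N by lia.
by rewrite mulnC; congr (_ * _)%N; congr (_ `!); lia.
Qed.

Lemma even_case h : (0 < h)%N -> (h.*2 %| SS h.*2)%N.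
Proof.
move=> h0.
have E : SS h.*2 = (2 * \sum_(k < h) ff h.*2 k)%N.
  rewrite /SS -!(big_mkord xpredT (ff h.*2)).
  rewrite (big_cat_nat (n := h)) /=; [|lia|lia].
  have -> : (h.*2 = h + h)%N by lia.
  have -> : (\sum_(h <= i < h + h) ff (h + h) i = \sum_(0 <= i < h) ff (h + h) i)%N.
    have -> : (h = 0 + h)%N by []. rewrite (big_addn 0 (h+h) h).
    rewrite big_nat_rev /=.
    have -> : (h + h - h = h)%N by lia.
    apply: eq_big_nat => i /andP [_ hi].
    have -> : (0 + h - i.+1 + h = (h + h) - 1 - i)%N by lia.
    apply: ff_sym; lia.
  lia.
rewrite E -muln2 mulnC dvdn_pmul2l //.
apply: dvdn_sum => k _.
apply: dvdn_mull; apply: dvdn_fact; have := ltn_ord k; lia.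
Qed.

Lemma composite_case n : (1 < n)%N -> ~~ prime n -> ~~ (n %| (1 + SS n))%N.
Proof.
move=> n1 np.
have pp := pdiv_prime n1.
set p := pdiv n in pp *.
have pn : (p %| n)%N by apply: pdiv_dvd.
have p1 : (1 < p)%N by apply: prime_gt1.
have big : (p * p <= n)%N.
  rewrite leqNgt; apply/negP => H; move/negP: np; apply.
  apply: ltn_pdiv2_prime; first lia. by rewrite expnS expn1.
have pS : (p %| SS n)%N.
  apply: dvdn_sum => k _; rewrite /ff.
  case: (ltnP k p) => kp.
  - apply: dvdn_mull; apply: dvdn_fact; have := ltn_ord k; nia.
  - apply: dvdn_mulr; apply: dvdn_fact; lia.
apply/negP => H.
have : (p %| 1 + SS n)%N by apply: dvdn_trans H.
rewrite dvdn_addl // dvdn1 => /eqP; lia.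
Qed.

Lemma prime_case p : prime p -> odd p -> (p %| 1 + SS p)%N.
Proof.
move=> pp op.
have ch := pchar_Fp pp.
rewrite (dvdn_pcharf ch) natrD /SS natr_sum.
have key : forall k, (k < p)%N ->
  ((ff p k)%:R : 'F_p) = (-1) ^+ k.+1.
  elim=> [|k IH] kp.
  - rewrite /ff fact0 mul1n subn0 expr1.
    have p1 : (1 < p)%N by apply: prime_gt1.
    have W : (p %| (p.-1)`!.+1)%N by rewrite -(Wilson p1).
    move: W; rewrite (dvdn_pcharf ch) -natr1 => /eqP W.
    have -> : (p - 1 = p.-1)%N by lia.
    by apply/eqP; rewrite -subr_eq0 opprK W.
  - have IH' := IH (ltnW kp).
    have nz : ((k.+1)%:R : 'F_p) != 0.
      by rewrite -(dvdn_pcharf ch); apply/negP => /dvdn_leq; lia.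
    have e1 : (p - k - 1 = (p - k.+1 - 1).+1)%N by lia.
    have e2 : (((p - k.+1 - 1).+1)%:R : 'F_p) = - (k.+1)%:R.
      apply/eqP; rewrite -subr_eq0 opprK -natrD -(dvdn_pcharf ch).
      have -> : ((p - k.+1 - 1).+1 + k.+1 = p)%N by lia.
      by [].
    have H : ((ff p k)%:R : 'F_p) = - (ff p k.+1)%:R.
      rewrite /ff e1 factS natrM.
      rewrite [in RHS]factS !natrM e2 /=.
      ring.
    by rewrite -[LHS]opprK -H IH' [in RHS]exprS mulN1r.
apply/eqP; rewrite (eq_bigr (fun k : 'I_p => (-1) ^+ (val k).+1)); last first.
  by move=> k _; apply: key.
rewrite -(big_mkord xpredT (fun k => (-1 : 'F_p) ^+ k.+1)).
have gen : forall m, (\sum_(0 <= k < m) (-1 : 'F_p) ^+ k.+1) = - (odd m)%:R.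
  elim=> [|m IHm]; first by rewrite big_nil oppr0.
  rewrite big_nat_recr //= IHm -signr_odd /=.
  by case: (odd m) => /=; rewrite ?expr0 ?expr1; ring.
by rewrite gen op subrr.
Qed.

Theorem theorem2 (n : nat) (hn : (0 < n)%N) :
  (exists m : nat, Zplus n = m%:R) <-> (~~ odd n \/ n = 1%N \/ prime n).
Proof.
rewrite int_iff //.
split.
- move=> H.
  case on: (odd n); last by left.
  right; case: (ltnP 1 n) => n1; last by left; lia.
  right; apply/negPn/negP => np.
  by move: (composite_case n n1 np); rewrite -[1%N]/(nat_of_bool true) -on H.
- case.
  + move=> ev; rewrite (negbTE ev) add0n.
    have [h eh] : exists h, n = h.*2.
      by exists n./2; rewrite -[in LHS](odd_double_half n) (negbTE ev).
    rewrite eh; apply: even_case; lia.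
  + case=> [->|pn]; first by rewrite dvd1n.
    case on: (odd n).
    * exact: prime_case.
    * have [h eh] : exists h, n = h.*2.
        by exists n./2; rewrite -[in LHS](odd_double_half n) on.
      rewrite add0n eh; apply: even_case; lia.
Qed.
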